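(* Let $m_1,m_2\ge3$ be coprime integers, let $n\ge1$ be divisible by $m_1$, and let $Q\in C(n,m_1,m_2)$. 1) If $Ch_1(Q)\ne0$, then $Ch_2(Q)=0$. 2) If $Ch_1(Q)\ne0$ and $Ch_3(Q)\ne0$, then $m_1=3$ and $Ch_4(Q)=0$. 3) If $Ch_1(Q)\ne0$, $Ch_3(Q)\ne0$ and $Ch_5(Q)\ne0$, then $m_1=3$ and $m_2=4$.
   Context: $T_k$ denotes the Chebyshev polynomial of the first kind of degree $k$, $T_k(\cos\phi)=\cos(k\phi)$. Every real polynomial $Q$ of degree $n$ can be uniquely written as $Q=\sum_{k=0}^n d_kT_k$ with $d_k\in\mathbb{R}$; set $Ch_i(Q)=d_{n-i}$ for $0\le i\le n$. $C(n,m_1,m_2)$ denotes the set of real polynomials $Q=\sum_{k=0}^n d_kT_k$ with $d_n\ne0$ and such that $d_k=0$ unless $k$ is divisible by $m_1$ or by $m_2$. *)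

(* Defs.v *)
From HB Require Import structures.
From mathcomp Require Import all_boot all_order all_algebra.
From Stdlib Require Import ClassicalEpsilon.
Set Implicit Arguments. Unset Strict Implicit. Unset Printing Implicit Defensive.
Import Order.TTheory GRing.Theory Num.Theory.
Local Open Scope ring_scope.

Section Cheb.
Variable R : realFieldType.

Fixpoint cheb_pair (k : nat) : {poly R} * {poly R} :=
  match k with
  | 0%N => (1, 'X)
  | k'.+1 => let: (a, b) := cheb_pair k' in (b, 2%:P * 'X * b - a)
  end.

(* Chebyshev polynomial of the first kind T_k:
   T_0 = 1, T_1 = X, T_{k+2} = 2 X T_{k+1} - T_k. *)
Definition cheb (k : nat) : {poly R} := (cheb_pair k).1.

Definition cheb_rep (n : nat) (Q : {poly R}) (d : nat -> R) : Prop :=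
  Q = \sum_(k < n.+1) d k *: cheb k.

Definition cheb_coefs (Q : {poly R}) : nat -> R :=
  epsilon (inhabits (fun _ => 0)) (fun d => cheb_rep (size Q).-1 Q d).

Definition Ch (i : nat) (Q : {poly R}) : R :=
  if (i <= (size Q).-1)%N then cheb_coefs Q ((size Q).-1 - i)%N else 0.

Definition inC (n m1 m2 : nat) (Q : {poly R}) : Prop :=
  exists d : nat -> R, [/\ cheb_rep n Q d, d n != 0 &
    forall k, (k <= n)%N -> d k != 0 -> ((m1 %| k)%N || (m2 %| k)%N)].
End Cheb.

(* Main.v *)
Require Import Defs.
From HB Require Import structures.
From mathcomp Require Import all_boot all_order all_algebra.
From mathcomp Require Import zify.
From Stdlib Require Import ClassicalEpsilon.
Import Order.TTheory GRing.Theory Num.Theory.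
Local Open Scope ring_scope.

Section Aux.
Variable R : realFieldType.

Lemma cheb_pairE k : cheb_pair R k = (cheb R k, cheb R k.+1).
Proof.
elim: k => [//|k IH]; rewrite /cheb /= IH //.
Qed.

Lemma chebSS k : cheb R k.+2 = 2%:P * 'X * cheb R k.+1 - cheb R k.
Proof. by rewrite {1}/cheb /= cheb_pairE. Qed.

Lemma size_cheb2 k : size (cheb R k) = k.+1 /\ size (cheb R k.+1) = k.+2.
Proof.
elim: k => [|k [IH1 IH2]].
  by rewrite /cheb /= size_poly1 size_polyX.
split=> //; rewrite chebSS -mulrA size_polyDl.
  rewrite size_Cmul ?pnatr_eq0 // mulrC size_mulX ?IH2 //.
  by rewrite -size_poly_eq0 IH2.
rewrite size_polyN IH1 size_Cmul ?pnatr_eq0 // mulrC size_mulX ?IH2 //.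
by rewrite -size_poly_eq0 IH2.
Qed.

Lemma size_cheb k : size (cheb R k) = k.+1.
Proof. by case: (size_cheb2 k). Qed.

Lemma lead_cheb k : (cheb R k)`_k != 0.
Proof.
have := size_cheb k => Hs.
have : lead_coef (cheb R k) != 0 by rewrite lead_coef_eq0 -size_poly_eq0 Hs.
by rewrite lead_coefE Hs.
Qed.

Lemma coef_big n (c : nat -> R) j :
  (\sum_(k < n.+1) c k *: cheb R k)`_j = \sum_(k < n.+1) c k * (cheb R k)`_j.
Proof. by rewrite coef_sum; apply: eq_bigr => k _; rewrite coefZ. Qed.

Lemma coef_big_top n (c : nat -> R) :
  (\sum_(k < n.+1) c k *: cheb R k)`_n = c n * (cheb R n)`_n.
Proof.
rewrite coef_big big_ord_recr /= big1 ?add0r // => k _.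
rewrite nth_default ?mulr0 // size_cheb; exact: ltn_ord.
Qed.

Lemma coef_big_high n (c : nat -> R) j : (n < j)%N ->
  (\sum_(k < n.+1) c k *: cheb R k)`_j = 0.
Proof.
move=> Hj; rewrite coef_big big1 // => k _.
rewrite nth_default ?mulr0 // size_cheb.
exact: leq_trans (ltn_ord k) Hj.
Qed.

Lemma cheb_indep n (c : nat -> R) :
  \sum_(k < n.+1) c k *: cheb R k = 0 -> forall k, (k <= n)%N -> c k = 0.
Proof.
elim: n => [|n IH] H.
  move=> k; rewrite leqn0 => /eqP ->.
  have := congr1 (fun p : {poly R} => p`_0) H.
  rewrite coef_big_top coef0 => /eqP; rewrite mulf_eq0 (negPf (lead_cheb 0)) orbF.
  by move/eqP.
have Hn : c n.+1 = 0.
  have := congr1 (fun p : {poly R} => p`_n.+1) H.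
  rewrite coef_big_top coef0 => /eqP; rewrite mulf_eq0 (negPf (lead_cheb _)) orbF.
  by move/eqP.
move=> k; rewrite leq_eqVlt => /orP [/eqP -> //|Hk].
apply: IH => //.
by move: H; rewrite big_ord_recr /= Hn scale0r addr0.
Qed.

Lemma cheb_uniq n (d e : nat -> R) :
  \sum_(k < n.+1) d k *: cheb R k = \sum_(k < n.+1) e k *: cheb R k ->
  forall k, (k <= n)%N -> d k = e k.
Proof.
move=> H k Hk; apply/eqP; rewrite -subr_eq0; apply/eqP.
apply: (@cheb_indep n (fun k => d k - e k)) Hk.
rewrite (eq_bigr (fun k : 'I_n.+1 => d k *: cheb R k - e k *: cheb R k)).
  by rewrite sumrB H subrr.
by move=> i _; rewrite scalerBl.
Qed.

Lemma Ch_rep n (Q : {poly R}) (d : nat -> R) :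
  cheb_rep n Q d -> d n != 0 ->
  forall i, Ch i Q = if (i <= n)%N then d (n - i)%N else 0.
Proof.
move=> HQ Hd i.
have Hs : size Q = n.+1.
  apply/eqP; rewrite eqn_leq; apply/andP; split.
    apply/leq_sizeP => j Hj; rewrite HQ; exact: coef_big_high.
  rewrite ltnNge; apply/negP => /leq_sizeP /(_ n (leqnn n)).
  by rewrite HQ coef_big_top => /eqP; rewrite mulf_eq0 (negPf Hd) (negPf (lead_cheb _)).
have He : cheb_rep (size Q).-1 Q (cheb_coefs Q).
  by apply: epsilon_spec; exists d; rewrite Hs.
rewrite /Ch Hs /=; case: ifP => // Hi.
apply: (@cheb_uniq n); last exact: leq_subr.
by rewrite -HQ; move: He; rewrite /cheb_rep Hs.
Qed.
End Aux.

Lemma dvd_diff {m x k} : (m %| x)%N -> (m %| x - k)%N -> (k <= x)%N -> (m %| k)%N.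
Proof.
move=> H1 H2 Hk; have := dvdn_sub H1 H2; by rewrite subKn.
Qed.

Lemma dvd_diff2 {m x a b} : (m %| x - a)%N -> (m %| x - b)%N -> (a <= b)%N -> (b <= x)%N ->
  (m %| b - a)%N.
Proof.
move=> H1 H2 Hab Hb; have := dvdn_sub H1 H2.
have -> : (x - a - (x - b) = b - a)%N by lia.
done.
Qed.

Theorem lemma3p3 (R : realFieldType) (m1 m2 n : nat) (Q : {poly R}) :
  (3 <= m1)%N -> (3 <= m2)%N -> coprime m1 m2 -> (1 <= n)%N -> (m1 %| n)%N ->
  inC n m1 m2 Q ->
  [/\ (Ch 1 Q != 0 -> Ch 2 Q = 0),
      (Ch 1 Q != 0 -> Ch 3 Q != 0 -> m1 = 3%N /\ Ch 4 Q = 0) &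
      (Ch 1 Q != 0 -> Ch 3 Q != 0 -> Ch 5 Q != 0 -> m1 = 3%N /\ m2 = 4%N)].
Proof.
move=> h1 h2 hc hn hd [d [Hrep Hdn Hdk]].
have E := @Ch_rep R n Q d Hrep Hdn.
have key : forall i, (i <= n)%N -> d (n - i)%N != 0 -> (m1 %| n - i)%N || (m2 %| n - i)%N.
  by move=> i Hi; apply: Hdk; exact: leq_subr.
have small : forall m k, (3 <= m)%N -> (0 < k)%N -> (m %| k)%N -> (3 <= k)%N.
  by move=> m k Hm Hk /(dvdn_leq Hk) Hmk; exact: leq_trans Hm Hmk.
have P1 : Ch 1 Q != 0 -> (m2 %| n - 1)%N.
  rewrite E hn => /(key 1%N hn) /orP [H|//].
  by have := small _ 1 h1 isT (dvd_diff hd H hn).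
have P3 : Ch 1 Q != 0 -> Ch 3 Q != 0 -> m1 = 3%N.
  move=> c1 c3; have H2 := P1 c1; move: c3; rewrite E.
  case: ifP => [H3|]; last by rewrite eqxx.
  move/(key 3%N H3)/orP => [H|H].
    have := @dvdn_leq _ 3 isT (dvd_diff hd H H3); lia.
  by have := small _ (3-1)%N h2 isT (dvd_diff2 H2 H (isT : (1 <= 3)%N) H3).
split.
- move=> c1; have H2 := P1 c1; rewrite E; case: ifP => // H3.
  apply/eqP/negPn/negP => /(key 2%N H3)/orP [H|H].
    by have := small _ 2 h1 isT (dvd_diff hd H H3).
  by have := small _ (2-1)%N h2 isT (dvd_diff2 H2 H (isT : (1 <= 3)%N) H3).
- move=> c1 c3; have m13 := P3 c1 c3; split=> //.
  have H2 := P1 c1; rewrite E; case: ifP => // H4.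
  apply/eqP/negPn/negP => /(key 4%N H4)/orP [H|H].
    by have := dvd_diff hd H H4; rewrite m13.
  have H3 := dvd_diff2 H2 H (isT : (1 <= 4)%N) H4.
  have m23 : m2 = 3%N by have := @dvdn_leq _ 3 isT H3; lia.
  by move: hc; rewrite m13 m23.
- move=> c1 c3 c5; have m13 := P3 c1 c3; split=> //.
  have H2 := P1 c1; move: c5; rewrite E; case: ifP => [H5|]; last by rewrite eqxx.
  move/(key 5%N H5)/orP => [H|H].
    by have := dvd_diff hd H H5; rewrite m13.
  have H4 := dvd_diff2 H2 H (isT : (1 <= 5)%N) H5.
  have Hle := @dvdn_leq _ 4 isT H4.
  have [E2|E2] : m2 = 3%N \/ m2 = 4%N by lia.
    by move: H4; rewrite E2.
  done.
Qed.
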